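(* Let $d\ge2$ be an integer, let $\lambda,D_1,\dots,D_d$ be real constants and $D=\sum_{i=1}^dD_i$. There exists $L=(L_1,\dots,L_d)\in C^1([0,1];\mathbb{R}^d)$ satisfying $$L_i'=-\Big(\sum_{k=1}^dL_k\Big)L_i-\lambda\ \text{ on }[0,1]\quad\text{and}\quad\int_0^1L_i(r)\,dr=D_i\qquad(i=1,\dots,d)$$ if and only if $\lambda<\pi^2/d$. Moreover, such a solution is unique. *)

(* Defs.v *)
From Stdlib Require Import Reals.
From Coquelicot Require Import Coquelicot.
Open Scope R_scope.

Definition I01 (x : R) : Prop := 0 <= x <= 1.

Fixpoint sumR (n : nat) (f : nat -> R) : R :=
  match n with
  | O => 0
  | S m => sumR m f + f m
  end.

Definition deriv_on01 (f f' : R -> R) : Prop :=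
  forall x, I01 x ->
    filterlim (fun h => (f (x + h) - f x) / h)
      (within (fun h => h <> 0 /\ I01 (x + h)) (locally 0))
      (locally (f' x)).

Definition cont_on01 (g : R -> R) : Prop :=
  forall x, I01 x -> filterlim g (within I01 (locally x)) (locally (g x)).

Definition C1_on01_with (f f' : R -> R) : Prop :=
  deriv_on01 f f' /\ cont_on01 f'.

Definition IsSol (d : nat) (lam : R) (Dc : nat -> R) (L : nat -> R -> R) : Prop :=
  exists L' : nat -> R -> R,
    forall i, (i < d)%nat ->
      C1_on01_with (L i) (L' i) /\
      (forall r, I01 r -> L' i r = - (sumR d (fun k => L k r)) * L i r - lam) /\
      is_RInt (L i) 0 1 (Dc i).

(* Main.v *)
Require Import Defs.
From Stdlib Require Import Reals.
From Coquelicot Require Import Coquelicot.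
From Stdlib Require Import Lra Lia Psatz.
Open Scope R_scope.

Lemma ball_R (c : R) (e : R) (y : R) : ball c e y <-> Rabs (y - c) < e.
Proof. reflexivity. Qed.

Definition WC (g : R -> R) (x : R) :=
  filterlim g (within I01 (locally x)) (locally (g x)).

Lemma deriv_interior f f' x : deriv_on01 f f' -> 0 < x < 1 -> is_derive f x (f' x).
Proof.
  intros H Hx. apply is_derive_Reals. intros eps Heps.
  assert (Hx' : I01 x) by (unfold I01; lra).
  specialize (H x Hx'). apply filterlim_locally with (eps := mkposreal eps Heps) in H.
  destruct H as [del Hdel].
  assert (Hp : 0 < Rmin del (Rmin x (1 - x))).
  { apply Rmin_glb_lt; [apply cond_pos|apply Rmin_glb_lt; lra]. }
  exists (mkposreal _ Hp). intros h hne hlt. simpl in hlt.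
  assert (h1 := Rmin_l del (Rmin x (1 - x))).
  assert (h2 := Rmin_r del (Rmin x (1 - x))).
  assert (h3 := Rmin_l x (1 - x)). assert (h4 := Rmin_r x (1 - x)).
  assert (Hb : ball 0 del h) by (apply ball_R; rewrite Rminus_0_r; lra).
  specialize (Hdel h Hb). apply ball_R in Hdel. apply Hdel.
  split; auto. unfold I01. revert hlt; unfold Rabs; destruct Rcase_abs; intros; lra.
Qed.

Lemma deriv_cont f f' : deriv_on01 f f' -> cont_on01 f.
Proof.
  intros H x Hx. apply filterlim_locally. intros eps.
  specialize (H x Hx). apply filterlim_locally with (eps := mkposreal 1 Rlt_0_1) in H.
  destruct H as [del Hdel].
  set (K := Rabs (f' x) + 1).
  assert (HK : 0 < K) by (unfold K; pose proof (Rabs_pos (f' x)); lra).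
  assert (Hp : 0 < Rmin del (eps / K)).
  { apply Rmin_glb_lt; [apply cond_pos|]. apply Rdiv_lt_0_compat; [apply cond_pos|auto]. }
  exists (mkposreal _ Hp). intros y Hy HIy. change R in y. apply ball_R. change (Rabs (y - x) < Rmin del (eps / K)) in Hy.
  assert (h1 := Rmin_l del (eps / K)). assert (h2 := Rmin_r del (eps / K)).
  destruct (Req_dec y x) as [->|Hne].
  { rewrite Rminus_eq_0, Rabs_R0. apply cond_pos. }
  set (h := y - x).
  assert (Hb : ball 0 del h). { apply ball_R. unfold h. rewrite Rminus_0_r. lra. }
  specialize (Hdel h Hb). assert (Hh : h <> 0) by (unfold h; lra).
  replace (x + h) with y in Hdel by (unfold h; ring).
  specialize (Hdel (conj Hh HIy)).
  set (q := (f y - f x) / h) in Hdel. change (Rabs (q - f' x) < 1) in Hdel.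
  assert (Eq : f y - f x = q * h) by (unfold q; field; auto).
  rewrite Eq, Rabs_mult.
  assert (Hq : Rabs q <= K).
  { unfold K. pose proof (Rabs_triang_inv q (f' x)). lra. }
  assert (Hhl : Rabs h < eps / K) by (unfold h; lra).
  assert (Rabs h * K < eps).
  { apply Rmult_lt_reg_r with (/ K). apply Rinv_0_lt_compat; auto.
    rewrite Rmult_assoc, Rinv_r by lra. rewrite Rmult_1_r. exact Hhl. }
  pose proof (Rabs_pos h). pose proof (Rabs_pos q). nra.
Qed.

Lemma is_derive_deriv01 f f' : (forall x, I01 x -> is_derive f x (f' x)) -> deriv_on01 f f'.
Proof.
  intros H x Hx. specialize (H x Hx). apply is_derive_Reals in H.
  apply filterlim_locally. intros eps.
  destruct (H eps (cond_pos eps)) as [del Hdel].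
  exists del. intros h Hh [hne _]. apply ball_R. apply Hdel; auto.
  change (Rabs (h - 0) < del) in Hh. rewrite Rminus_0_r in Hh. exact Hh.
Qed.

Lemma cont_WC g x : continuous g x -> WC g x.
Proof.
  intros H. unfold WC. eapply filterlim_filter_le_1; [|exact H].
  intros P HP. unfold within. apply filter_imp with P; auto.
Qed.

Lemma cont_cont01 g : (forall x, I01 x -> continuous g x) -> cont_on01 g.
Proof. intros H x Hx. apply cont_WC. auto. Qed.

Lemma WC_plus f g x : WC f x -> WC g x -> WC (fun y => f y + g y) x.
Proof.
  intros Hf Hg. unfold WC.
  eapply filterlim_comp_2; [exact Hf|exact Hg|].
  apply (filterlim_plus (f x) (g x)).
Qed.

Lemma WC_mult f g x : WC f x -> WC g x -> WC (fun y => f y * g y) x.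
Proof.
  intros Hf Hg. unfold WC.
  eapply filterlim_comp_2; [exact Hf|exact Hg|].
  apply (filterlim_mult (f x) (g x)).
Qed.

Lemma WC_comp f h x : WC f x -> continuous h (f x) -> WC (fun y => h (f y)) x.
Proof.
  intros Hf Hh. unfold WC. eapply filterlim_comp; [exact Hf|exact Hh].
Qed.

Lemma WC_const c x : WC (fun _ => c) x.
Proof. apply cont_WC. apply continuous_const. Qed.

Lemma WC_sum n (L : nat -> R -> R) x : (forall k, (k < n)%nat -> WC (L k) x) ->
  WC (fun r => sumR n (fun k => L k r)) x.
Proof.
  induction n; intros H; simpl.
  - apply WC_const.
  - apply WC_plus; [apply IHn; intros; apply H; lia|apply H; lia].
Qed.

Lemma eq_eps a b : (forall eps, 0 < eps -> Rabs (a - b) < eps) -> a = b.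
Proof.
  intros H. destruct (Req_dec a b) as [|Hne]; auto.
  assert (Hp : 0 < Rabs (a - b)) by (apply Rabs_pos_lt; lra).
  specialize (H _ Hp). lra.
Qed.

Lemma interior_const Q : (forall x, 0 < x < 1 -> is_derive Q x 0) ->
  forall a b, 0 < a < 1 -> 0 < b < 1 -> Q a = Q b.
Proof.
  intros H a b Ha Hb.
  destruct (MVT_gen Q a b (fun _ => 0)) as [c [_ Hc]].
  - intros x Hx. apply H. revert Hx. unfold Rmin, Rmax; destruct Rle_dec; lra.
  - intros x Hx. apply continuity_pt_filterlim. apply (ex_derive_continuous Q).
    exists 0. apply H. revert Hx. unfold Rmin, Rmax; destruct Rle_dec; lra.
  - lra.
Qed.

Lemma const01 Q : (forall x, 0 < x < 1 -> is_derive Q x 0) -> cont_on01 Q ->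
  forall x, I01 x -> Q x = Q 0.
Proof.
  intros H Hc.
  assert (K : forall x, I01 x -> Q x = Q (1/2)).
  { intros x Hx. apply eq_eps. intros eps Heps.
    specialize (Hc x Hx). apply filterlim_locally with (eps := mkposreal eps Heps) in Hc.
    destruct Hc as [del Hdel].
    set (s := Rmin (1/2) del).
    assert (hs1 : s <= 1/2) by apply Rmin_l. assert (hs2 : s <= del) by apply Rmin_r.
    assert (hs0 : 0 < s) by (apply Rmin_glb_lt; [lra|apply cond_pos]).
    set (y := x + s * (1/2 - x)).
    unfold I01 in Hx.
    assert (Hy : 0 < y < 1) by (unfold y; split; nra).
    assert (Hyx : Rabs (y - x) < del).
    { unfold y. replace (x + s * (1/2 - x) - x) with (s * (1/2 - x)) by ring.
      rewrite Rabs_mult, Rabs_pos_eq by lra.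
      assert (Rabs (1/2 - x) <= 1/2) by (unfold Rabs; destruct Rcase_abs; lra).
      nra. }
    specialize (Hdel y Hyx). assert (HIy : I01 y) by (unfold I01; lra).
    specialize (Hdel HIy). change (Rabs (Q y - Q x) < eps) in Hdel.
    rewrite (interior_const Q H y (1/2)) in Hdel by lra.
    rewrite Rabs_minus_sym. exact Hdel. }
  intros x Hx. rewrite (K x Hx), (K 0); auto. unfold I01; lra.
Qed.

Lemma RInt_pos g v : (forall x, I01 x -> continuous g x) -> (forall x, I01 x -> 0 < g x) ->
  is_RInt g 0 1 v -> 0 < v.
Proof.
  intros Hc Hp Hi.
  assert (Hc2 : forall c, 0 <= c <= 1 -> continuity_pt g c).
  { intros c Hc'. apply continuity_pt_filterlim. apply Hc. exact Hc'. }
  assert (H01 : 0 <= 1) by lra.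
  destruct (continuity_ab_min g 0 1 H01 Hc2) as [m [Hm Hm01]].
  assert (Hgm : 0 < g m) by (apply Hp; exact Hm01).
  assert (Hle : (1 - 0) * g m <= v).
  { apply (is_RInt_le (fun _ => g m) g 0 1); [lra| exact (is_RInt_const 0 1 (g m)) | exact Hi|].
    intros x Hx. apply Hm. lra. }
  lra.
Qed.

Definition clamp (x : R) := Rmax 0 (Rmin 1 x).

Lemma clamp_I01 x : I01 (clamp x).
Proof. unfold clamp, I01, Rmax, Rmin. repeat destruct Rle_dec; lra. Qed.

Lemma clamp_id x : I01 x -> clamp x = x.
Proof. unfold clamp, I01, Rmax, Rmin. repeat destruct Rle_dec; lra. Qed.

Lemma clamp_lip x y : Rabs (clamp y - clamp x) <= Rabs (y - x).
Proof.
  unfold clamp, Rmax, Rmin. repeat destruct Rle_dec;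
  unfold Rabs; repeat destruct Rcase_abs; lra.
Qed.

Lemma clamp_cont P : cont_on01 P -> forall x, continuous (fun y => P (clamp y)) x.
Proof.
  intros HP x. unfold continuous.
  eapply filterlim_comp; [|apply (HP (clamp x) (clamp_I01 x))].
  intros Q HQ. destruct HQ as [del Hdel].
  exists del. intros y Hy. apply Hdel; [|apply clamp_I01].
  change (Rabs (clamp y - clamp x) < del).
  change (Rabs (y - x) < del) in Hy. pose proof (clamp_lip x y). lra.
Qed.

Lemma uniq_lin (V V' P : R -> R) :
  (forall x, 0 < x < 1 -> is_derive V x (V' x)) -> cont_on01 V -> cont_on01 P ->
  (forall r, 0 < r < 1 -> V' r = - P r * V r) -> is_RInt V 0 1 0 ->
  forall r, I01 r -> V r = 0.
Proof.
  intros HV HVc HP HE HI.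
  set (Pt := fun y => P (clamp y)).
  assert (HPt : forall x, continuous Pt x) by (apply clamp_cont; auto).
  set (F := fun x => RInt Pt 0 x).
  assert (HF : forall x, is_derive F x (Pt x)).
  { intros x. apply (is_derive_RInt Pt F 0); [|apply HPt].
    apply filter_forall. intros b. unfold F. apply (RInt_correct (V := R_CompleteNormedModule) Pt 0 b). apply ex_RInt_continuous.
    intros; apply HPt. }
  assert (DF : forall x, Derive (fun y => F y) x = Pt x) by (intros; apply is_derive_unique; auto).
  set (Q := fun x => V x * exp (F x)).
  assert (HQ : forall x, I01 x -> Q x = Q 0).
  { apply const01.
    - intros x Hx. unfold Q.
      assert (DV : Derive (fun y => V y) x = V' x) by (apply is_derive_unique; auto).
      auto_derive.
      + split; [exists (V' x); auto|split; [exists (Pt x); auto|auto]].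
      + rewrite DV, DF, HE by auto. unfold Pt. rewrite clamp_id by (unfold I01; lra).
        ring.
    - intros x Hx. unfold Q. apply (WC_mult V (fun y => exp (F y))); [apply HVc; auto|].
      apply cont_WC. apply (continuous_comp F exp).
      + apply (ex_derive_continuous F). exists (Pt x); auto.
      + apply (ex_derive_continuous exp). exists (exp (F x)). apply is_derive_exp. }
  assert (HF0 : F 0 = 0) by (unfold F; exact (RInt_point (V := R_CompleteNormedModule) 0 Pt)).
  assert (HVr : forall r, I01 r -> V r = V 0 * exp (- F r)).
  { intros r Hr. specialize (HQ r Hr). unfold Q in HQ. rewrite HF0, exp_0, Rmult_1_r in HQ.
    rewrite <- HQ, Rmult_assoc, <- exp_plus. replace (F r + - F r) with 0 by ring.
    rewrite exp_0; ring. }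
  assert (V0 : V 0 = 0).
  { destruct (Req_dec (V 0) 0) as [|Hne]; auto. exfalso.
    set (g := fun x => V 0 * V 0 * exp (- F x)).
    assert (Hg : is_RInt g 0 1 (V 0 * 0)).
    { apply (is_RInt_ext (fun x => scal (V 0) (V x))).
      - intros x Hx. rewrite Rmin_left, Rmax_right in Hx by lra.
        unfold g. change (scal (V 0) (V x)) with (V 0 * V x).
        rewrite (HVr x) by (unfold I01; lra). symmetry; apply Rmult_assoc.
      - exact (is_RInt_scal (V := R_NormedModule) V 0 1 (V 0) 0 HI). }
    assert (0 < V 0 * 0).
    { apply (RInt_pos g); auto.
      - intros x _. unfold g. apply (ex_derive_continuous (fun x => V 0 * V 0 * exp (- F x))).
        auto_derive. exists (Pt x); auto.
      - intros x _. unfold g. apply Rmult_lt_0_compat; [|apply exp_pos].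
        assert (0 < V 0 * V 0) by (apply Rsqr_pos_lt; auto). auto. }
    lra. }
  intros r Hr. rewrite HVr, V0 by auto. ring.
Qed.

Lemma sumR_ext n f g : (forall k, (k < n)%nat -> f k = g k) -> sumR n f = sumR n g.
Proof.
  induction n; intros H; simpl; auto.
  rewrite IHn, H; auto; intros; apply H; lia.
Qed.

Lemma sumR_lin n A B f : sumR n (fun k => A * f k + B) = A * sumR n f + INR n * B.
Proof.
  induction n; cbn [sumR]; [simpl; ring|]. rewrite IHn, S_INR. ring.
Qed.

Lemma is_derive_sum n (L L' : nat -> R -> R) x :
  (forall k, (k < n)%nat -> is_derive (L k) x (L' k x)) ->
  is_derive (fun r => sumR n (fun k => L k r)) x (sumR n (fun k => L' k x)).
Proof.
  induction n; intros H; simpl.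
  - apply (is_derive_const (K := R_AbsRing) 0 x).
  - apply (is_derive_plus (fun r => sumR n (fun k => L k r)) (L n)).
    + apply IHn; intros; apply H; lia.
    + apply H; lia.
Qed.

Lemma is_RInt_sum n (L : nat -> R -> R) (Dc : nat -> R) :
  (forall k, (k < n)%nat -> is_RInt (L k) 0 1 (Dc k)) ->
  is_RInt (fun r => sumR n (fun k => L k r)) 0 1 (sumR n Dc).
Proof.
  induction n; intros H; simpl.
  - pose proof (is_RInt_const (V := R_NormedModule) 0 1 0) as K.
    change (scal (1 - 0) 0) with ((1 - 0) * 0) in K. rewrite Rmult_0_r in K. exact K.
  - apply (is_RInt_plus (V := R_NormedModule) (fun r => sumR n (fun k => L k r)) (L n)).
    + apply IHn; intros; apply H; lia.
    + apply H; lia.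
Qed.

Lemma WC_opp f x : WC f x -> WC (fun y => - f y) x.
Proof.
  intros H. apply (WC_comp f Ropp); auto.
  apply (ex_derive_continuous Ropp). auto_derive. auto.
Qed.

Lemma WC_minus f g x : WC f x -> WC g x -> WC (fun y => f y - g y) x.
Proof. intros Hf Hg. apply (WC_plus f (fun y => - g y)); auto. apply WC_opp; auto. Qed.

Lemma sum_facts d lam Dc L : IsSol d lam Dc L ->
  let S := fun r => sumR d (fun k => L k r) in
  (forall x, 0 < x < 1 -> is_derive S x (- S x * S x - INR d * lam)) /\
  cont_on01 S /\ is_RInt S 0 1 (sumR d Dc).
Proof.
  intros [L' HL] S. split; [|split].
  - intros x Hx. unfold S.
    replace (- sumR d (fun k => L k x) * sumR d (fun k => L k x) - INR d * lam)
      with (sumR d (fun k => L' k x)).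
    + apply is_derive_sum. intros k Hk. apply (deriv_interior (L k) (L' k)); auto.
      apply HL; auto.
    + rewrite (sumR_ext d (fun k => L' k x) (fun k => (- sumR d (fun k => L k x)) * L k x + (- lam))).
      * rewrite sumR_lin. ring.
      * intros k Hk. destruct (HL k Hk) as [_ [HE _]]. rewrite HE; [ring|unfold I01; lra].
  - intros x Hx. apply WC_sum. intros k Hk. apply (deriv_cont (L k) (L' k)); auto.
    apply HL; auto.
  - apply is_RInt_sum. intros k Hk. apply HL; auto.
Qed.

Lemma only_if d lam Dc L : (1 <= d)%nat -> IsSol d lam Dc L -> lam < PI ^ 2 / INR d.
Proof.
  intros Hd Hs.
  destruct (sum_facts d lam Dc L Hs) as [HS [HSc _]].
  set (S := fun r => sumR d (fun k => L k r)) in *.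
  assert (Hdp : 0 < INR d) by (apply lt_0_INR; lia).
  assert (HPI : 0 < PI) by apply PI_RGT_0.
  destruct (Rle_or_lt lam 0) as [Hl|Hl].
  { apply Rle_lt_trans with 0; auto. apply Rdiv_lt_0_compat; auto. nra. }
  set (mu := INR d * lam).
  assert (Hmu : 0 < mu) by (unfold mu; nra).
  set (w := sqrt mu).
  assert (Hw : 0 < w) by (apply sqrt_lt_R0; auto).
  assert (Hw2 : w * w = mu) by (apply sqrt_sqrt; lra).
  set (psi := fun x => atan (S x / w) + w * x).
  assert (Hpsi : forall x, I01 x -> psi x = psi 0).
  { apply const01.
    - intros x Hx. unfold psi.
      assert (DS : Derive (fun y => S y) x = - S x * S x - INR d * lam)
        by (apply is_derive_unique; auto).
      auto_derive.
      + exists (- S x * S x - INR d * lam). auto.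
      + rewrite DS. fold mu. rewrite <- Hw2. unfold Rsqr. field.
        split; [lra|]. nra.
    - intros x Hx. unfold psi.
      apply (WC_plus (fun y => atan (S y / w)) (fun y => w * y)).
      + apply (WC_comp (fun y => S y / w) atan).
        * apply (WC_mult S (fun _ => / w)); [apply HSc; auto|apply WC_const].
        * apply (ex_derive_continuous atan). exists (/ (1 + (S x / w)²)).
          apply is_derive_atan.
      + apply (WC_mult (fun _ => w) (fun y => y)); [apply WC_const|].
        apply cont_WC. apply continuous_id. }
  assert (H1 : psi 1 = psi 0) by (apply Hpsi; unfold I01; lra).
  unfold psi in H1.
  pose proof (atan_bound (S 1 / w)). pose proof (atan_bound (S 0 / w)).
  assert (HwPI : w < PI) by lra.
  apply Rmult_lt_reg_r with (INR d); auto.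
  unfold Rdiv. rewrite Rmult_assoc, Rinv_l, Rmult_1_r by lra.
  replace (lam * INR d) with mu by (unfold mu; ring). rewrite <- Hw2. nra.
Qed.

Lemma uniq d lam Dc L1 L2 : IsSol d lam Dc L1 -> IsSol d lam Dc L2 ->
  forall i, (i < d)%nat -> forall r, I01 r -> L1 i r = L2 i r.
Proof.
  intros H1 H2.
  destruct (sum_facts d lam Dc L1 H1) as [HS1 [HSc1 HI1]].
  destruct (sum_facts d lam Dc L2 H2) as [HS2 [HSc2 HI2]].
  set (S1 := fun r => sumR d (fun k => L1 k r)) in *.
  set (S2 := fun r => sumR d (fun k => L2 k r)) in *.
  assert (ES : forall r, I01 r -> S1 r - S2 r = 0).
  { apply (uniq_lin (fun r => S1 r - S2 r)
      (fun r => (- S1 r * S1 r - INR d * lam) - (- S2 r * S2 r - INR d * lam))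
      (fun r => S1 r + S2 r)).
    - intros x Hx. exact (is_derive_minus S1 S2 x _ _ (HS1 x Hx) (HS2 x Hx)).
    - intros x Hx. apply WC_minus; [apply HSc1|apply HSc2]; auto.
    - intros x Hx. apply WC_plus; [apply HSc1|apply HSc2]; auto.
    - intros x Hx. ring.
    - pose proof (is_RInt_minus (V := R_NormedModule) S1 S2 0 1 _ _ HI1 HI2) as K.
      change (minus (sumR d Dc) (sumR d Dc)) with (sumR d Dc - sumR d Dc) in K.
      rewrite Rminus_eq_0 in K. exact K. }
  intros i Hi r Hr.
  destruct H1 as [L1' HL1]. destruct H2 as [L2' HL2].
  destruct (HL1 i Hi) as [[Hd1 Hc1] [HE1 HR1]].
  destruct (HL2 i Hi) as [[Hd2 Hc2] [HE2 HR2]].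
  assert (K : forall r, I01 r -> L1 i r - L2 i r = 0).
  { apply (uniq_lin (fun r => L1 i r - L2 i r) (fun r => L1' i r - L2' i r) S1).
    - intros x Hx. exact (is_derive_minus (L1 i) (L2 i) x _ _
        (deriv_interior _ _ x Hd1 Hx) (deriv_interior _ _ x Hd2 Hx)).
    - intros x Hx. apply WC_minus; [apply (deriv_cont _ _ Hd1)|apply (deriv_cont _ _ Hd2)]; auto.
    - auto.
    - intros x Hx. assert (Hx' : I01 x) by (unfold I01; lra).
      rewrite HE1, HE2 by auto. fold (S1 x). fold (S2 x).
      assert (S2 x = S1 x) by (pose proof (ES x Hx'); lra). rewrite H. ring.
    - pose proof (is_RInt_minus (V := R_NormedModule) (L1 i) (L2 i) 0 1 _ _ HR1 HR2) as K.
      change (minus (Dc i) (Dc i)) with (Dc i - Dc i) in K.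
      rewrite Rminus_eq_0 in K. exact K. }
  pose proof (K r Hr). lra.
Qed.

Lemma exd_cont (f : R -> R) (x : R) : ex_derive f x -> continuous f x.
Proof. apply (ex_derive_continuous f). Qed.

Lemma exist_u d lam Dc (u u' : R -> R) : (1 <= d)%nat ->
  (forall r, is_derive u r (u' r)) ->
  (forall r, is_derive u' r (- (INR d * lam) * u r)) ->
  (forall r, I01 r -> 0 < u r) -> ln (u 1) - ln (u 0) = sumR d Dc ->
  exists L, IsSol d lam Dc L.
Proof.
  intros Hd Hu Hu' Hpos Hln.
  set (mu := INR d * lam) in *. set (D := sumR d Dc) in *.
  assert (Hdp : 0 < INR d) by (apply lt_0_INR; lia).
  assert (Du : forall r, Derive (fun y => u y) r = u' r) by (intros; apply is_derive_unique; auto).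
  assert (Du' : forall r, Derive (fun y => u' y) r = - mu * u r) by (intros; apply is_derive_unique; auto).
  assert (Eu : forall r, ex_derive (fun y => u y) r) by (intros r; exists (u' r); auto).
  assert (Eu' : forall r, ex_derive (fun y => u' y) r) by (intros r; exists (- mu * u r); auto).
  assert (Cu : forall r, continuous u r) by (intros; apply exd_cont; auto).
  assert (CinvU : forall r, I01 r -> continuous (fun y => / u y) r).
  { intros r Hr. apply continuous_Rinv_comp; auto. specialize (Hpos r Hr). lra. }
  set (J := RInt (fun r => / u r) 0 1).
  assert (HJ : is_RInt (fun r => / u r) 0 1 J).
  { apply (RInt_correct (V := R_CompleteNormedModule)). apply ex_RInt_continuous.
    intros z Hz. rewrite Rmin_left, Rmax_right in Hz by lra. apply CinvU. exact Hz. }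
  assert (HJp : 0 < J).
  { apply (RInt_pos (fun r => / u r)); auto.
    intros x Hx. apply Rinv_0_lt_compat. auto. }
  set (a := fun i => (Dc i - D / INR d) / J).
  exists (fun i r => a i / u r + u' r / (INR d * u r)).
  exists (fun i r => - a i * u' r / (u r)^2 + (- mu * (u r)^2 - (u' r)^2) / (INR d * (u r)^2)).
  intros i Hi. split; [split|split].
  - apply is_derive_deriv01. intros x Hx. pose proof (Hpos x Hx) as Hux.
    auto_derive.
    + repeat split; auto; try lra; try (repeat apply Rmult_integral_contrapositive_currified; lra).
    + rewrite Du, Du'. field. lra.
  - apply cont_cont01. intros x Hx. pose proof (Hpos x Hx) as Hux.
    apply exd_cont. auto_derive. repeat split; auto; try lra; try (repeat apply Rmult_integral_contrapositive_currified; lra).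
  - intros r Hr. pose proof (Hpos r Hr) as Hur.
    rewrite (sumR_ext d _ (fun k => (/ J * / u r) * Dc k + (- D / (INR d * J * u r) + u' r / (INR d * u r)))).
    + rewrite sumR_lin. fold D. unfold a. unfold mu. field. repeat split; lra.
    + intros k Hk. unfold a. field. repeat split; lra.
  - assert (H1 : is_RInt (fun r => a i * / u r) 0 1 (a i * J)).
    { exact (is_RInt_scal (V := R_NormedModule) _ 0 1 (a i) J HJ). }
    assert (H2 : is_RInt (fun r => u' r / (INR d * u r)) 0 1 (ln (u 1) / INR d - ln (u 0) / INR d)).
    { apply (is_RInt_derive (V := R_CompleteNormedModule) (fun r => ln (u r) / INR d)).
      - intros x Hx. rewrite Rmin_left, Rmax_right in Hx by lra.
        pose proof (Hpos x Hx) as Hux.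
        auto_derive.
        + repeat split; auto.
        + rewrite Du. field. lra.
      - intros x Hx. rewrite Rmin_left, Rmax_right in Hx by lra.
        pose proof (Hpos x Hx) as Hux.
        apply exd_cont. auto_derive. repeat split; auto; try lra; try (repeat apply Rmult_integral_contrapositive_currified; lra). }
    pose proof (is_RInt_plus (V := R_NormedModule) _ _ 0 1 _ _ H1 H2) as K.
    change (plus (a i * J) (ln (u 1) / INR d - ln (u 0) / INR d)) with
        (a i * J + (ln (u 1) / INR d - ln (u 0) / INR d)) in K.
    assert (E1 : ln (u 1) / INR d - ln (u 0) / INR d = D / INR d)
      by (rewrite <- Hln; field; lra).
    assert (E2 : a i * J + D / INR d = Dc i) by (unfold a; field; lra).
    rewrite E1, E2 in K. exact K.
Qed.

Lemma exist_sigma d lam Dc (s s' : R -> R) : (1 <= d)%nat ->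
  (forall t, is_derive s t (s' t)) ->
  (forall t, is_derive s' t (- (INR d * lam) * s t)) ->
  s 0 = 0 -> (forall t, 0 < t <= 1 -> 0 < s t) -> exists L, IsSol d lam Dc L.
Proof.
  intros Hd Hs Hs' Hs0 Hsp.
  set (mu := INR d * lam) in *.
  set (E := exp (sumR d Dc)).
  assert (HE : 0 < E) by apply exp_pos.
  assert (Ds : forall t, Derive (fun y => s y) t = s' t) by (intros; apply is_derive_unique; auto).
  assert (Ds' : forall t, Derive (fun y => s' y) t = - mu * s t) by (intros; apply is_derive_unique; auto).
  assert (Es : forall t, ex_derive (fun y => s y) t) by (intros t; exists (s' t); auto).
  assert (Es' : forall t, ex_derive (fun y => s' y) t) by (intros t; exists (- mu * s t); auto).
  assert (Hnn : forall t, 0 <= t <= 1 -> 0 <= s t).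
  { intros t Ht. destruct (Req_dec t 0) as [->|Hne]; [lra|]. apply Rlt_le, Hsp; lra. }
  apply (exist_u d lam Dc (fun r => s (1 - r) + E * s r) (fun r => - s' (1 - r) + E * s' r)); auto.
  - intros r. auto_derive.
    + repeat split; auto.
    + rewrite !Ds. unfold Rminus. ring.
  - intros r. auto_derive.
    + repeat split; auto.
    + fold mu. rewrite !Ds'. unfold Rminus. ring.
  - intros r [H0 H1]. destruct (Rlt_or_le r 1) as [Hr|Hr].
    + assert (0 < s (1 - r)) by (apply Hsp; lra).
      assert (0 <= s r) by (apply Hnn; lra). nra.
    + assert (0 <= s (1 - r)) by (apply Hnn; lra).
      assert (0 < s r) by (apply Hsp; lra). nra.
  - replace (1 - 1) with 0 by ring. replace (1 - 0) with 1 by ring. rewrite Hs0.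
    assert (0 < s 1) by (apply Hsp; lra).
    rewrite Rplus_0_l, Rmult_0_r, Rplus_0_r, ln_mult by auto.
    unfold E. rewrite ln_exp. ring.
Qed.

Theorem lemma3p2 (d : nat) (Hd : (2 <= d)%nat) (lam : R) (Dc : nat -> R) :
  ((exists L : nat -> R -> R, IsSol d lam Dc L) <-> lam < PI ^ 2 / INR d) /\
  (forall L1 L2 : nat -> R -> R, IsSol d lam Dc L1 -> IsSol d lam Dc L2 ->
     forall i, (i < d)%nat -> forall r, I01 r -> L1 i r = L2 i r).
Proof.
  split; [split|].
  - intros [L HL]. apply (only_if d lam Dc L); auto. lia.
  - intros Hlam.
    assert (Hd1 : (1 <= d)%nat) by lia.
    assert (Hdp : 0 < INR d) by (apply lt_0_INR; lia).
    assert (HPI : 0 < PI) by apply PI_RGT_0.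
    set (mu := INR d * lam).
    assert (HmuPI : mu < PI * PI).
    { unfold mu. apply Rmult_lt_compat_l with (r := INR d) in Hlam; auto.
      replace (INR d * (PI ^ 2 / INR d)) with (PI * PI) in Hlam by (field; lra). exact Hlam. }
    destruct (Rtotal_order mu 0) as [Hm|[Hm|Hm]].
    + set (v := sqrt (- mu)).
      assert (Hv : 0 < v) by (apply sqrt_lt_R0; lra).
      assert (Hv2 : v * v = - mu) by (apply sqrt_sqrt; lra).
      apply (exist_sigma d lam Dc (fun t => exp (v * t) - exp (- (v * t)))
                                 (fun t => v * (exp (v * t) + exp (- (v * t))))); auto.
      * intros t. auto_derive; auto. ring.
      * intros t. auto_derive; auto. fold mu. replace (- mu) with (v * v) by lra. ring.
      * simpl. rewrite Rmult_0_r, Ropp_0. ring.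
      * intros t Ht. simpl. assert (exp (- (v * t)) < exp (v * t)).
        { apply exp_increasing. nra. } lra.
    + apply (exist_sigma d lam Dc (fun t => t) (fun t => 1)); auto.
      * intros t. auto_derive; auto. 
      * intros t. fold mu. rewrite Hm. auto_derive; auto. ring.
      * intros t Ht; simpl; lra.
    + set (w := sqrt mu).
      assert (Hw : 0 < w) by (apply sqrt_lt_R0; lra).
      assert (Hw2 : w * w = mu) by (apply sqrt_sqrt; lra).
      assert (HwPI : w < PI) by nra.
      apply (exist_sigma d lam Dc (fun t => sin (w * t)) (fun t => w * cos (w * t))); auto.
      * intros t. auto_derive; auto. ring.
      * intros t. auto_derive; auto. fold mu. rewrite <- Hw2. ring.
      * simpl. rewrite Rmult_0_r. apply sin_0.
      * intros t Ht. apply sin_gt_0; nra.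
  - intros L1 L2 H1 H2. apply (uniq d lam Dc L1 L2 H1 H2).
Qed.
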